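(* Let $\mathcal P$ be any set of integer vectors in $\mathbb Z^d$. Then one of the following holds: (i) there is a non-zero $v\in\mathbb R^d$ with $v\cdot p\ge0$ for all $p\in\mathcal P$; (ii) there is a strict sublattice of $\mathbb Z^d$ containing every vector of $\mathcal P$; (iii) there is a finite subset $\mathcal Q=\{q_1,\dots,q_k\}\subseteq\mathcal P$ that is spanning. Moreover, in case (iii), for any norm $\|\cdot\|_M$ on $\mathbb R^d$ there are constants $\mu,\nu$ such that every $z\in\mathbb Z^d$ can be written as $z=q_1+\dots+q_n$ with each $q_i\in\mathcal Q$, $n\le\mu\|z\|_M$ and $\sum_{i=1}^n\|q_i\|_M\le\nu\|z\|_M$.
   Context: A set of vectors in $\mathbb Z^d$ is spanning if every vector of $\mathbb Z^d$ can be written as a finite sum of (possibly repeated) vectors from the set. *)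

(* Defs.v *)
From HB Require Import structures.
From mathcomp Require Import all_boot all_order all_algebra.
From mathcomp Require Import reals.
Set Implicit Arguments. Unset Strict Implicit. Unset Printing Implicit Defensive.
Import Order.TTheory GRing.Theory Num.Theory.
Local Open Scope ring_scope.

Definition spanning (d : nat) (Q : 'rV[int]_d -> Prop) : Prop :=
  forall z : 'rV[int]_d, exists s : seq 'rV[int]_d,
    (forall q, q \in s -> Q q) /\ z = \sum_(q <- s) q.

Definition is_sublattice (d : nat) (L : 'rV[int]_d -> Prop) : Prop :=
  L 0 /\ (forall x y, L x -> L y -> L (x - y)).

Definition strict_sublattice (d : nat) (L : 'rV[int]_d -> Prop) : Prop :=
  is_sublattice L /\ exists z, ~ L z.

Definition zR (R : realType) (d : nat) (z : 'rV[int]_d) : 'rV[R]_d :=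
  map_mx (fun x : int => x%:~R) z.

Definition dotR (R : realType) (d : nat) (u v : 'rV[R]_d) : R :=
  \sum_(i < d) u 0 i * v 0 i.

Definition is_norm (R : realType) (d : nat) (N : 'rV[R]_d -> R) : Prop :=
  (forall x, N x = 0 -> x = 0) /\
  (forall (a : R) x, N (a *: x) = `|a| * N x) /\
  (forall x y, N (x + y) <= N x + N y).

(* Main.v *)
Require Import Defs.
From HB Require Import structures.
From mathcomp Require Import all_boot all_order all_algebra.
From mathcomp Require Import reals.
From mathcomp Require Import lra.
From mathcomp Require Import boolp classical_sets topology normedtype derive.
Import Order.TTheory GRing.Theory Num.Theory.
Import numFieldNormedType.Exports.
Local Open Scope ring_scope.

Section Norm.
Variables (R : realType) (d : nat) (N : 'rV[R]_d -> R).
Hypothesis hN : is_norm N.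

Lemma N0 : N 0 = 0.
Proof. case: hN => _ [hZ _]. by rewrite -(scale0r 0) hZ normr0 mul0r. Qed.

Lemma NN x : N (- x) = N x.
Proof. case: hN => _ [hZ _]. by rewrite -scaleN1r hZ normrN normr1 mul1r. Qed.

Lemma Nge0 x : 0 <= N x.
Proof.
case: hN => _ [_ hT]. have := hT x (- x). rewrite subrr N0 NN.
by rewrite -mulr2n pmulrn_lge0.
Qed.

Lemma mx_norm_entry (x : 'rV[R]_d) i : `|x 0 i| <= `|x|.
Proof.
have /mapP[j Hj ->] : `|x 0 i| \in [seq `|x k.1 k.2| | k : 'I_1 * 'I_d].
  by apply/mapP; exists (0, i) => //=; rewrite mem_enum.
have -> : `|x| = mx_norm x by [].
by rewrite mx_normrE; apply/bigmax_geP; right => /=; exists j.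
Qed.

Lemma N_sum (s : seq 'I_d) (F : 'I_d -> 'rV[R]_d) :
  N (\sum_(i <- s) F i) <= \sum_(i <- s) N (F i).
Proof.
case: hN => _ [_ hT].
elim: s => [|a s IH]; first by rewrite !big_nil N0.
rewrite !big_cons; apply: le_trans (hT _ _) _; exact: lerD.
Qed.

Definition KN := \sum_(j < d) N (delta_mx 0 j).

Lemma N_lip x : N x <= KN * `|x|.
Proof.
case: hN => _ [hZ _].
rewrite {1}[x]row_sum_delta; apply: le_trans (N_sum _ _) _.
rewrite /KN mulr_suml; apply: ler_sum => j _.
rewrite hZ mulrC; apply: ler_wpM2l; first exact: Nge0.
exact: mx_norm_entry.
Qed.

Lemma KN_ge0 : 0 <= KN.
Proof. by apply: sumr_ge0 => j _; exact: Nge0. Qed.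

Lemma N_cont : continuous N.
Proof.
case: hN => _ [hZ hT].
move=> x; apply/(@cvgrPdist_lt R R^o _ (nbhs x) (nbhs_filter x)) => e e0; apply/(@nbhs_normP R ('rV[R]_d : normedModType R)).
exists (e / (KN + 1)) => /=; first by rewrite divr_gt0 // ltr_wpDl // KN_ge0.
move=> y /= Hy.
have H1 : `|N x - N y| <= N (x - y).
  have t1 : N y <= N (x - y) + N x.
    by rewrite -(NN (x - y)) opprB; have := hT (y - x) x; rewrite subrK.
  have t2 : N x <= N (x - y) + N y.
    by have := hT (x - y) y; rewrite subrK.
  rewrite ler_norml; apply/andP; split; lra.
apply: le_lt_trans H1 _; apply: le_lt_trans (N_lip _) _.
have Hk : 0 < KN + 1 by rewrite ltr_wpDl // KN_ge0.
rewrite ltr_pdivlMr // in Hy.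
apply: le_lt_trans (_ : KN * `|x - y| <= (KN + 1) * `|x - y|) _.
  by apply: ler_wpM2r => //; rewrite lerDl.
by rewrite mulrC.
Qed.

Lemma norm_lb : exists c : R, 0 < c /\ forall x : 'rV[R]_d, `|x| <= c * N x.
Proof.
case: hN => h0 [hZ hT].
pose A := [set x : 'rV[R]_d | `|x| = 1]%classic.
have [[a Aa]|A0] := pselect (A !=set0)%classic.
- have cA : compact A.
    apply: bounded_closed_compact.
      exists 1; split => // M M1 x Ax; rewrite /= Ax; exact: ltW.
    apply: (preimage_closed (f := (Num.norm : 'rV[R]_d -> R)) (D := [set 1]%classic)).
      by move=> z _; exact: norm_continuous.
    exact: closed_eq.
  have [c cA' cmin] := EVT_min_rV (f := N) (ex_intro _ a Aa) cA
    (continuous_subspaceT N_cont).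
  have Ac : A c by rewrite -inE.
  have Nc : 0 < N c.
    rewrite lt_def Nge0 andbT; apply/eqP => /h0 c0.
    by move: Ac; rewrite /A /= c0 normr0 => /eqP; rewrite eq_sym oner_eq0.
  exists (N c)^-1; split; first by rewrite invr_gt0.
  move=> x; have [->|x0] := eqVneq x 0; first by rewrite normr0 N0 mulr0.
  have : A (`|x|^-1 *: x) by rewrite /A /= normfZV.
  rewrite -inE => /cmin; rewrite hZ ger0_norm ?invr_ge0 // => H.
  have nx : 0 < `|x| by rewrite normr_gt0.
  rewrite mulrC ler_pdivlMr //.
  by have := ler_wpM2l (ltW nx) H; rewrite mulrA mulfV ?mul1r ?gt_eqF // mulrC.
- exists 1; split => // x; rewrite mul1r.
  have [->|x0] := eqVneq x 0; first by rewrite normr0 N0.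
  exfalso; apply: A0; exists (`|x|^-1 *: x); by rewrite /A /= normfZV.
Qed.
End Norm.
Section Sep.
Variable R : realType.

Lemma zRD d (x y : 'rV[int]_d) : zR R (x + y) = zR R x + zR R y.
Proof. by apply/rowP => i; rewrite !mxE intrD. Qed.
Lemma zRMn d (x : 'rV[int]_d) k : zR R (x *+ k) = zR R x *+ k.
Proof. by elim: k => [|k IH]; [apply/rowP => i; rewrite !mxE | rewrite !mulrS zRD IH]. Qed.
Lemma dotRDr d (u x y : 'rV[R]_d) : dotR u (x + y) = dotR u x + dotR u y.
Proof. by rewrite /dotR -big_split; apply: eq_bigr => i _; rewrite mxE mulrDr. Qed.
Lemma dotRMnr d (u x : 'rV[R]_d) k : dotR u (x *+ k) = dotR u x *+ k.
Proof. by elim: k => [|k IH]; [rewrite /dotR big1 // => i _; rewrite mxE mulr0 | rewrite !mulrS dotRDr IH]. Qed.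
Lemma dotRNl d (u x : 'rV[R]_d) : dotR (- u) x = - dotR u x.
Proof. by rewrite /dotR -sumrN; apply: eq_bigr => i _; rewrite mxE mulNr. Qed.
Lemma dotR_delta d (j : 'I_d) (x : 'rV[R]_d) : dotR (delta_mx 0 j) x = x 0 j.
Proof.
rewrite /dotR (bigD1 j) //= mxE !eqxx mul1r big1 ?addr0 // => i /negbTE ij.
by rewrite mxE ij andbF mul0r.
Qed.
Lemma dotR_row n (a c : 'rV[R]_1) (b e : 'rV[R]_n) :
  dotR (row_mx a b) (row_mx c e) = a 0 0 * c 0 0 + dotR b e.
Proof.
rewrite /dotR big_split_ord /= big_ord1; congr (_ + _).
  by rewrite !(row_mxEl). 
by apply: eq_bigr => i _; rewrite !row_mxEr.
Qed.
End Sep.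
Lemma mxMn (T : nmodType) m n (A : 'M[T]_(m, n)) k i j : (A *+ k) i j = A i j *+ k.
Proof. by elim: k => [|k IH]; rewrite ?mulr0n ?mxE // !mulrS mxE IH. Qed.

Lemma zmn (x y : int) : x *+ absz y = x * (absz y)%:Z.
Proof. by rewrite -mulr_natr natz. Qed.

Section Sep2.
Variable R : realType.

Lemma sepZ n (S : 'rV[int]_n -> Prop) : S 0 -> (forall x y, S x -> S y -> S (x + y)) ->
  (exists v : 'rV[R]_n, v != 0 /\ forall s, S s -> 0 <= dotR v (zR R s))
  \/ (forall z, exists m, (0 < m)%N /\ S (z *+ m)).
Proof.
elim: n S => [|n IH] S S0 SD.
  by right => z; exists 1%N; split => //; rewrite mulr1n (thinmx0 z).
have SMn : forall x k, S x -> S (x *+ k).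
  move=> x k Sx; elim: k => [|k IHk]; first by rewrite mulr0n.
  by rewrite mulrS; apply: SD.
have dnz : (delta_mx 0 ord0 : 'rV[R]_n.+1) != 0.
  apply/eqP => /matrixP /(_ 0 ord0); rewrite !mxE !eqxx /= => /eqP.
  by rewrite oner_eq0.
have [Hp|Hp] := pselect (forall s, S s -> 0 <= s 0 ord0).
  left; exists (delta_mx 0 ord0); split => // s Ss.
  by rewrite dotR_delta mxE ler0z; exact: Hp.
have [Hn|Hn] := pselect (forall s, S s -> s 0 ord0 <= 0).
  left; exists (- delta_mx 0 ord0); split; first by rewrite oppr_eq0.
  by move=> s Ss; rewrite dotRNl dotR_delta mxE oppr_ge0 lerz0; exact: Hn.
have [a [Sa fa]] : exists a, S a /\ 0 < a 0 ord0.
  apply: contrapT => H; apply: Hn => s Ss; rewrite leNgt; apply/negP => fs.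
  by apply: H; exists s; split.
have [b [Sb fb]] : exists b, S b /\ b 0 ord0 < 0.
  apply: contrapT => H; apply: Hp => s Ss; rewrite leNgt; apply/negP => fs.
  by apply: H; exists s; split.
pose S' := fun y : 'rV[int]_n => S (row_mx (0 : 'rV[int]_1) y).
have Hdec : forall y : 'rV[int]_(1 + n), y 0 ord0 = 0 -> y = row_mx 0 (rsubmx y).
  move=> y y0; rewrite -{1}[y]hsubmxK; congr row_mx; apply/rowP => i.
  rewrite ord1 !mxE -y0; congr (y 0 _); exact: val_inj.
have S'0 : S' 0 by rewrite /S' row_mx0.
have S'D : forall x y, S' x -> S' y -> S' (x + y).
  by move=> x y; rewrite /S' => Sx Sy; rewrite -[0 : 'rV_1]addr0 -add_row_mx; exact: SD.
case: (IH S' S'0 S'D) => [[w [w0 Hw]]|Hfull].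
- left.
  pose g := fun s : 'rV[int]_(1 + n) => dotR w (zR R (rsubmx s)).
  pose F := fun s : 'rV[int]_(1 + n) => ((s 0 ord0)%:~R : R).
  have rsD : forall x y : 'rV[int]_(1 + n), rsubmx (x + y) = rsubmx x + rsubmx y.
    by move=> x y; apply/rowP => i; rewrite !mxE.
  have rsMn : forall (x : 'rV[int]_(1 + n)) k, rsubmx (x *+ k) = rsubmx x *+ k.
    by move=> x k; apply/rowP => i; rewrite !mxE !mxMn !mxE.
  have gD : forall x y, g (x + y) = g x + g y.
    by move=> x y; rewrite /g rsD zRD dotRDr.
  have gMn : forall x k, g (x *+ k) = g x *+ k.
    by move=> x k; rewrite /g rsMn zRMn dotRMnr.
  have g0 : forall s, S s -> s 0 ord0 = 0 -> 0 <= g s.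
    move=> s Ss s0; apply: Hw; rewrite /S' -Hdec //.
  have rmn : forall (x : R) (y : int), x *+ absz y = x * (`|y|)%:~R.
    by move=> x y; rewrite -mulr_natr.
  have key : forall a b, S a -> 0 < a 0 ord0 -> S b -> b 0 ord0 < 0 ->
      - g a / F a <= g b / (- F b).
    move=> a' b' Sa' fa' Sb' fb'.
    pose c := a' *+ absz (b' 0 ord0) + b' *+ absz (a' 0 ord0).
    have Sc : S c by apply: SD; apply: SMn.
    have c0 : c 0 ord0 = 0.
      rewrite /c !mxE !mxMn !zmn (gez0_abs (ltW fa')) (ltz0_abs fb').
      by rewrite mulrN mulrC addNr.
    have := g0 c Sc c0; rewrite /c gD !gMn !rmn (ger0_norm (ltW fa')) (ltr0_norm fb').
    rewrite mulrNz => H.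
    have Fa : 0 < F a' by rewrite /F ltr0z.
    have Fb : 0 < - F b' by rewrite /F oppr_gt0 ltrz0.
    rewrite ler_pdivrMr // mulrAC ler_pdivlMr //.
    rewrite /F in Fa Fb *. nra.
  pose A := [set x : R | exists s, S s /\ 0 < s 0 ord0 /\ x = - g s / F s]%classic.
  have A0 : (A !=set0)%classic by exists (- g a / F a); exists a.
  have Aub : forall s, S s -> s 0 ord0 < 0 -> ubound A (g s / - F s).
    by move=> s Ss fs x [a' [Sa' [fa' ->]]]; exact: key.
  have hsA : has_sup A by split => //; exists (g b / - F b); exact: Aub.
  pose t := sup A.
  exists (row_mx (const_mx t : 'rV[R]_1) w : 'rV[R]_(1 + n)); split.
    apply/eqP => H; move/eqP: w0; apply.
    rewrite -(row_mxKr (const_mx t : 'rV[R]_1) w) H; apply/rowP => i; rewrite !mxE.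
    done.
  move=> s Ss.
  have -> : zR R s = row_mx (zR R (lsubmx (s : 'rV_(1 + n)))) (zR R (rsubmx (s : 'rV_(1 + n)))).
    by rewrite /zR -map_row_mx hsubmxK.
  have e : lshift n (0 : 'I_1) = ord0 :> 'I_(1 + n) by apply: val_inj.
  rewrite dotR_row !mxE e -/(F s) -/(g s).
  case: (ltgtP (s 0 ord0) 0) => fs.
  + have := ge_sup A0 (Aub s Ss fs); rewrite -/t.
    have Fs : 0 < - F s by rewrite /F oppr_gt0 ltrz0.
    rewrite ler_pdivlMr // => H; nra.
  + have : A (- g s / F s) by exists s.
    move/(sup_upper_bound hsA); rewrite -/t.
    have Fs : 0 < F s by rewrite /F ltr0z.
    rewrite ler_pdivrMr // => H; nra.
  + by rewrite /F fs mulr0 add0r; exact: g0.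
- right => z.
  have key : forall c, S c -> c 0 ord0 != 0 ->
      z 0 ord0 *+ absz (c 0 ord0) = c 0 ord0 *+ absz (z 0 ord0) ->
      exists m, (0 < m)%N /\ S (z *+ m).
    move=> c Sc c0 hzc.
    pose y : 'rV[int]_(1 + n) := z *+ (absz (c 0 ord0)) - c *+ (absz (z 0 ord0)).
    have [m1 [m1p Hm1]] := Hfull (rsubmx y).
    exists (muln (absz (c 0 ord0)) m1); split; first by rewrite muln_gt0 absz_gt0 c0 m1p.
    have -> : z *+ (muln (absz (c 0 ord0)) m1) = y *+ m1 + c *+ (muln (absz (z 0 ord0)) m1).
      by rewrite /y mulrnBl !mulrnA subrK.
    apply: SD; last exact: SMn.
    have y0 : (y *+ m1) 0 ord0 = 0.
      by rewrite mxMn /y !mxE !mxMn hzc subrr mul0rn.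
    rewrite (Hdec _ y0).
    have -> : rsubmx (y *+ m1) = rsubmx y *+ m1.
      by apply/rowP => i; rewrite !mxE !mxMn !mxE.
    exact: Hm1.
  have [z0|z0] := leP 0 (z 0 ord0).
    apply: (key a Sa); first by rewrite gt_eqF.
    by rewrite !zmn !gez0_abs // ?ltW // mulrC.
  apply: (key b Sb); first by rewrite lt_eqF.
  by rewrite !zmn !ltz0_abs // !mulrN mulrC.
Qed.
End Sep2.
Definition SGp d (A : 'rV[int]_d -> Prop) z := exists s : seq 'rV[int]_d,
  (forall q, q \in s -> A q) /\ z = \sum_(q <- s) q.
Definition icombP d (B : 'rV[int]_d -> Prop) z := exists s : seq (int * 'rV[int]_d),
  (forall x, x \in s -> B x.2) /\ z = \sum_(x <- s) x.2 *~ x.1.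

Arguments SGp {d}.
Arguments icombP {d}.

Section SG.
Variables (d : nat) (A : 'rV[int]_d -> Prop).
Lemma SGp0 : SGp A 0.
Proof. by exists [::]; rewrite big_nil. Qed.
Lemma SGpD x y : SGp A x -> SGp A y -> SGp A (x + y).
Proof.
move=> [s1 [H1 ->]] [s2 [H2 ->]]; exists (s1 ++ s2); rewrite big_cat; split => //.
by move=> q; rewrite mem_cat => /orP [] ?; [apply: H1 | apply: H2].
Qed.
Lemma SGp1 x : A x -> SGp A x.
Proof. by move=> Ax; exists [:: x]; rewrite big_seq1; split => // q; rewrite mem_seq1 => /eqP ->. Qed.
Lemma SGpMn x k : SGp A x -> SGp A (x *+ k).
Proof. move=> Hx; elim: k => [|k IH]; first by rewrite mulr0n; exact: SGp0. by rewrite mulrS; apply: SGpD. Qed.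
Lemma SGp_mono (A' : 'rV[int]_d -> Prop) z : (forall q, A q -> A' q) -> SGp A z -> SGp A' z.
Proof. by move=> HA [s [Hs ->]]; exists s; split => // q /Hs /HA. Qed.
End SG.

Lemma gen_span d (A B : 'rV[int]_d -> Prop) : (forall z, icombP B z) ->
  (forall p, B p -> SGp A p /\ SGp A (- p)) -> forall z, SGp A z.
Proof.
move=> Hc Hp z; have [s [Hs ->]] := Hc z.
elim: s Hs => [|x s IH] Hs; first by rewrite big_nil; exact: SGp0.
rewrite big_cons; apply: SGpD; last by apply: IH => y ys; apply: Hs; rewrite in_cons ys orbT.
have [h1 h2] := Hp _ (Hs x (mem_head _ _)).
case: x {Hs} h1 h2 => k p /= h1 h2; case: k => m.
  by rewrite -pmulrn; exact: SGpMn.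
by rewrite NegzE -nmulrn -mulNrn; exact: SGpMn.
Qed.

Lemma mxz m n (M : 'M[int]_(m, n)) k i j : (M *~ k) i j = M i j *~ k.
Proof. by case: k => k; rewrite ?NegzE -?pmulrn -?nmulrn ?mxE mxMn. Qed.

Lemma zsum d (z : 'rV[int]_d) : z = \sum_(i <- enum 'I_d) delta_mx 0 i *~ z 0 i.
Proof.
rewrite big_enum /=; apply/rowP => j; rewrite summxE (bigD1 j) //= big1 ?addr0.
  by rewrite mxz mxE !eqxx /= intz.
by move=> i /negbTE ij; rewrite mxz mxE eq_sym ij andbF mul0rz.
Qed.

Lemma icomb_all d (z : 'rV[int]_d) : icombP (fun e => exists i, e = delta_mx 0 i) z.
Proof.
exists [seq (z 0 i, delta_mx 0 i) | i <- enum 'I_d]; split.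
  by move=> x /mapP [i _ ->]; exists i.
by rewrite big_map /=; exact: zsum.
Qed.
Lemma part1 (R : realType) (d : nat) (P : 'rV[int]_d -> Prop) :
    (exists v : 'rV[R]_d, v != 0 /\ forall p, P p -> 0 <= dotR v (zR R p))
    \/ (exists L : 'rV[int]_d -> Prop, strict_sublattice L /\ forall p, P p -> L p)
    \/ (exists Q : seq 'rV[int]_d, (forall q, q \in Q -> P q) /\
          spanning (fun q => q \in Q)).
Proof.
have := @sepZ R d (SGp P) (@SGp0 d P) (@SGpD d P).
case => [[v [v0 Hv]]|Hfull].
  by left; exists v; split => // p Pp; apply: Hv; exact: SGp1.
right; have [Hl|Hl] := pselect (exists L : 'rV[int]_d -> Prop,
   strict_sublattice L /\ forall p, P p -> L p); first by left.
right.
have Hic : forall z, icombP P z.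
  apply: contrapT => H; apply: Hl; exists (icombP P); split; last first.
    move=> p Pp; exists [:: (1, p)]; split; last by rewrite big_seq1 /= mulr1z.
    by move=> x; rewrite mem_seq1 => /eqP ->.
  split; last first.
    by apply: contrapT => H2; apply: H => z; apply: contrapT => H3; apply: H2; exists z.
  split; first by exists [::]; rewrite big_nil.
  move=> x y [sx [Hx ->]] [sy [Hy ->]].
  exists (sx ++ [seq (- u.1, u.2) | u <- sy]); split.
    move=> u; rewrite mem_cat => /orP [/Hx //|/mapP [u' /Hy H' ->]] //.
  rewrite big_cat big_map /= -sumrN; congr (_ + _); apply: eq_bigr => u _.
  by rewrite mulrNz.
have HSp : forall z, SGp P z.
  apply: (@gen_span d P P Hic) => p Pp; split; first exact: SGp1.
  have [m [m0 Hm]] := Hfull (- p); case: m m0 Hm => // k _ Hm.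
  have -> : - p = (- p) *+ k.+1 + p *+ k by rewrite mulrS mulNrn -addrA addNr addr0.
  by apply: SGpD => //; apply: SGpMn; exact: SGp1.
have [Q [HQ HQs]] : exists Q : seq 'rV[int]_d, (forall q, q \in Q -> P q) /\
    forall i, SGp (fun q => q \in Q) (delta_mx 0 i) /\ SGp (fun q => q \in Q) (- delta_mx 0 i).
  suff : forall l : seq 'I_d, exists Q : seq 'rV[int]_d, (forall q, q \in Q -> P q) /\
    forall i, i \in l -> SGp (fun q => q \in Q) (delta_mx 0 i) /\ SGp (fun q => q \in Q) (- delta_mx 0 i).
    by case/(_ (enum 'I_d)) => Q [HQ HQl]; exists Q; split => // i; apply: HQl; rewrite mem_enum.
  elim => [|i l [Q [HQ HQl]]]; first by exists [::]; split => // i; rewrite in_nil.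
  have [s1 [H1 E1]] := HSp (delta_mx 0 i); have [s2 [H2 E2]] := HSp (- delta_mx 0 i).
  exists (s1 ++ s2 ++ Q); split.
    by move=> q; rewrite !mem_cat => /orP [/H1 //|/orP [/H2 //|/HQ //]].
  move=> j; rewrite in_cons => /orP [/eqP ->|jl].
    split; [exists s1 | exists s2]; split => // q qs; by rewrite !mem_cat qs ?orbT.
  have [h1 h2] := HQl j jl; split; apply: SGp_mono; try eassumption;
    by move=> q qQ; rewrite !mem_cat qQ !orbT.
exists Q; split => //.
move=> z; apply: (@gen_span d _ _ (@icomb_all d)) => e [i ->]; exact: HQs i.
Qed.
Definition SGs d (A : 'rV[int]_d -> Prop) (k : nat) z := exists s : seq 'rV[int]_d,
  (forall q, q \in s -> A q) /\ z = \sum_(q <- s) q /\ (size s <= k)%N.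
Arguments SGs {d}.

Section SGS.
Variables (d : nat) (A : 'rV[int]_d -> Prop).
Lemma SGs0 : SGs A 0 0.
Proof. by exists [::]; rewrite big_nil. Qed.
Lemma SGsD k l x y : SGs A k x -> SGs A l y -> SGs A (k + l) (x + y).
Proof.
move=> [s1 [H1 [-> S1]]] [s2 [H2 [-> S2]]]; exists (s1 ++ s2); rewrite big_cat size_cat.
split; last by split => //; exact: leq_add.
by move=> q; rewrite mem_cat => /orP [] ?; [apply: H1 | apply: H2].
Qed.
Lemma SGs_mono k k' x : (k <= k')%N -> SGs A k x -> SGs A k' x.
Proof. by move=> kk [s [Hs [-> Ss]]]; exists s; do !split => //; exact: leq_trans kk. Qed.
Lemma SGsMn k x m : SGs A k x -> SGs A (k * m) (x *+ m).
Proof.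
move=> Hx; elim: m => [|m IH]; first by rewrite mulr0n muln0; exact: SGs0.
by rewrite mulrS mulnS; apply: SGsD.
Qed.
Lemma SGsZ K e c : SGs A K e -> SGs A K (- e) -> SGs A (K * absz c) (e *~ c).
Proof.
move=> h1 h2; case: c => m /=; first by rewrite -pmulrn; exact: SGsMn.
by rewrite NegzE -nmulrn -mulNrn; exact: SGsMn.
Qed.
End SGS.

Definition abssum d (z : 'rV[int]_d) : nat := \sum_(i <- enum 'I_d) absz (z ord0 i).
Arguments abssum {d}.

Lemma part2 (R : realType) (d : nat) (Q : seq 'rV[int]_d) :
     spanning (fun q => q \in Q) ->
     forall N : 'rV[R]_d -> R, is_norm N ->
     exists mu nu : R, forall z : 'rV[int]_d,
       exists s : seq 'rV[int]_d,
         (forall q, q \in s -> q \in Q) /\ z = \sum_(q <- s) q /\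
         (size s)%:R <= mu * N (zR R z) /\
         \sum_(q <- s) N (zR R q) <= nu * N (zR R z).
Proof.
move=> HQ N hN.
have [K HK] : exists K, forall i : 'I_d, SGs (fun q => q \in Q) K (delta_mx 0 i) /\
    SGs (fun q => q \in Q) K (- delta_mx 0 i).
  suff : forall l : seq 'I_d, exists K, forall i, i \in l ->
      SGs (fun q => q \in Q) K (delta_mx 0 i) /\ SGs (fun q => q \in Q) K (- delta_mx 0 i).
    by case/(_ (enum 'I_d)) => K HK; exists K => i; apply: HK; rewrite mem_enum.
  elim => [|i l [K HK]]; first by exists 0%N => i; rewrite in_nil.
  have [s1 [H1 E1]] := HQ (delta_mx 0 i); have [s2 [H2 E2]] := HQ (- delta_mx 0 i).
  exists (maxn K (maxn (size s1) (size s2))) => j; rewrite in_cons => /orP [/eqP ->|jl].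
    by split; [exists s1|exists s2]; do !split => //; rewrite !leq_max leqnn !orbT.
  have [h1 h2] := HK j jl; split; [apply: SGs_mono h1 | apply: SGs_mono h2];
    by rewrite leq_max leqnn.
have Hz : forall z : 'rV[int]_d,
    SGs (fun q => q \in Q) (K * abssum z) z.
  move=> z.
  suff : SGs (fun q => q \in Q) (K * abssum z)
     (\sum_(i <- enum 'I_d) delta_mx 0 i *~ z 0 i) by rewrite -zsum.
  rewrite /abssum; elim: (enum 'I_d) => [|i l IH]; first by rewrite !big_nil muln0; exact: SGs0.
  rewrite !big_cons mulnDr; apply: SGsD => //; have [h1 h2] := HK i; exact: SGsZ.
have [c [c0 Hc]] := @norm_lb R d N hN.
pose B := \sum_(q <- Q) N (zR R q).
have NB : forall q, q \in Q -> N (zR R q) <= B.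
  move=> q qQ; rewrite /B (big_rem q qQ) /= lerDl.
  by apply: sumr_ge0 => ? _; exact: (@Nge0 R d N hN).
have B0 : 0 <= B by apply: sumr_ge0 => ? _; exact: (@Nge0 R d N hN).
have Hent : forall z : 'rV[int]_d,
    ((abssum z)%:R : R) <= d%:R * `|zR R z|.
  move=> z; rewrite /abssum natr_sum big_enum /=.
  apply: le_trans (_ : \sum_(i < d) `|zR R z| <= _).
    apply: ler_sum => i _; rewrite natr_absz intr_norm.
    by have := @mx_norm_entry R d (zR R z) i; rewrite mxE.
  by rewrite sumr_const card_ord mulr_natl.
exists (K%:R * d%:R * c), (K%:R * d%:R * c * B) => z.
have [s [Hs [Es Ss]]] := Hz z.
exists s; split => //; split => //.
have Hsize : (size s)%:R <= K%:R * d%:R * c * N (zR R z).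
  apply: le_trans (_ : (muln K (abssum z))%:R <= _).
    by rewrite ler_nat.
  rewrite natrM -!mulrA ler_wpM2l //.
  apply: le_trans (Hent z) _.
  rewrite ler_wpM2l //; exact: Hc.
split => //.
apply: le_trans (_ : (size s)%:R * B <= _).
  elim: s Hs {Es Ss Hsize} => [|q s IH] Hs; first by rewrite big_nil mul0r.
  rewrite big_cons /= -[(size s).+1]addn1 natrD mulrDl mul1r addrC; apply: lerD.
    by apply: IH => q' qs; apply: Hs; rewrite in_cons qs orbT.
  by apply: NB; apply: Hs; exact: mem_head.
by rewrite mulrAC; apply: ler_wpM2r.
Qed.

Theorem lemma2p6 (R : realType) (d : nat) (P : 'rV[int]_d -> Prop) :
  ( (exists v : 'rV[R]_d, v != 0 /\ forall p, P p -> 0 <= dotR v (zR R p))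
    \/ (exists L : 'rV[int]_d -> Prop, strict_sublattice L /\ forall p, P p -> L p)
    \/ (exists Q : seq 'rV[int]_d, (forall q, q \in Q -> P q) /\
          spanning (fun q => q \in Q)) )
  /\
  (forall Q : seq 'rV[int]_d, (forall q, q \in Q -> P q) ->
     spanning (fun q => q \in Q) ->
     forall N : 'rV[R]_d -> R, is_norm N ->
     exists mu nu : R, forall z : 'rV[int]_d,
       exists s : seq 'rV[int]_d,
         (forall q, q \in s -> q \in Q) /\ z = \sum_(q <- s) q /\
         (size s)%:R <= mu * N (zR R z) /\
         \sum_(q <- s) N (zR R q) <= nu * N (zR R z)).
Proof.
split; first exact: part1.
by move=> Q _ HQ N hN; exact: part2.
Qed.
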